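(* Let $\Gamma$ be a congruence subgroup of $\mathrm{SL}_2(\mathbb{Z})$ containing $-I$, of level $N_0$, and let $N=N_0$, $4N_0$ or $2N_0$ according as $v_2(N_0)$ is $0$, $1$ or $\ge2$; assume $N>1$. Let $H$ be the image of $\Gamma$ in $\mathrm{SL}_2(\mathbb{Z}/N\mathbb{Z})$, let $\widetilde H=(\mathbb{Z}/N\mathbb{Z})^\times\cdot H\subseteq\mathrm{GL}_2(\mathbb{Z}/N\mathbb{Z})$, and assume $H=\widetilde H\cap\mathrm{SL}_2(\mathbb{Z}/N\mathbb{Z})$. Let $\mathcal{N}$ be the normalizer of $\widetilde H$ in $\mathrm{GL}_2(\mathbb{Z}/N\mathbb{Z})$, $\mathcal{C}=\mathcal{N}/\widetilde H$, and $Q_N=(\mathbb{Z}/N\mathbb{Z})^\times/((\mathbb{Z}/N\mathbb{Z})^\times)^2$, with $\det\colon\mathcal{C}\to Q_N$ the homomorphism induced by the determinant. Then the subgroups $G(N)\subseteq\mathrm{GL}_2(\mathbb{Z}/N\mathbb{Z})$ satisfying (a) $G(N)\cap\mathrm{SL}_2(\mathbb{Z}/N\mathbb{Z})=H$, (b) $G(N)\supseteq(\mathbb{Z}/N\mathbb{Z})^\times\cdot I$, and (c) $\det(G(N))=(\mathbb{Z}/N\mathbb{Z})^\times$ are precisely the inverse images under $\mathcal{N}\to\mathcal{C}$ of the subgroups $W\subseteq\mathcal{C}$ for which the determinant induces an isomorphism $W\xrightarrow{\sim}Q_N$.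
   Context: $v_2$ is the $2$-adic valuation. The determinant induces a map on $\mathcal{C}$ to $Q_N$ because $\det(\widetilde H)=((\mathbb{Z}/N\mathbb{Z})^\times)^2$. *)

(* Defs.v *)
From HB Require Import structures.
From mathcomp Require Import all_boot all_order all_algebra all_fingroup.
From mathcomp Require Import boolp.
Set Implicit Arguments. Unset Strict Implicit. Unset Printing Implicit Defensive.
Import GRing.Theory.
Local Open Scope ring_scope.

Definition Gamma_princ (M : nat) (A : 'M[int]_2) : Prop :=
  \det A = 1 /\ forall i j : 'I_2, (M%:Z %| A i j - (i == j)%:Z)%Z.

Definition congruence_subgroup (Gam : 'M[int]_2 -> Prop) : Prop :=
  [/\ forall A, Gam A -> \det A = 1,
      Gam 1%:M,
      forall A B, Gam A -> Gam B -> Gam (A *m B),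
      forall A, Gam A -> Gam (invmx A)
    & exists2 M, (0 < M)%N & forall A, Gamma_princ M A -> Gam A].

Definition level (Gam : 'M[int]_2 -> Prop) (N0 : nat) : Prop :=
  [/\ (0 < N0)%N, (forall A, Gamma_princ N0 A -> Gam A)
    & forall M, (0 < M)%N -> (forall A, Gamma_princ M A -> Gam A) -> (N0 <= M)%N].

Definition N_of_level (N0 : nat) : nat :=
  match logn 2 N0 with 0 => N0 | 1 => 4 * N0 | _ => 2 * N0 end.

Section GLN.
Variable N : nat.
Local Notation gT := {'GL_2['Z_N]}.

Definition redmx (A : 'M[int]_2) : 'M['Z_N]_2 := map_mx (fun z : int => z%:~R) A.

Definition SLN : {set gT} := [set g : gT | \det (GLval g) == 1].

Definition scalarsN : {set gT} := [set g : gT | is_scalar_mx (GLval g)].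

Definition imageN (Gam : 'M[int]_2 -> Prop) : {set gT} :=
  [set g : gT | `[< exists2 A, Gam A & redmx A = GLval g >]].

Definition Htilde (Gam : 'M[int]_2 -> Prop) : {set gT} :=
  (scalarsN * imageN Gam)%g.

Lemma det_GL_unit (g : gT) : \det (GLval g) \is a GRing.unit.
Proof. by rewrite -unitmxE; exact: GL_unit. Qed.

Definition detU (g : gT) : {unit 'Z_N} := FinRing.Unit (det_GL_unit g).

Definition squaresN : {set {unit 'Z_N}} := [set (u ^+ 2)%g | u : {unit 'Z_N}].
Definition QN : {set coset_of squaresN} := ([set: {unit 'Z_N}] / squaresN)%g.

Definition detQ (g : gT) : coset_of squaresN := coset squaresN (detU g).

Definition detC (Gam : 'M[int]_2 -> Prop) (w : coset_of (Htilde Gam)) :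
  coset_of squaresN := detQ (repr w).

End GLN.

(* Main.v *)
Require Import Defs.
From HB Require Import structures.
From mathcomp Require Import all_boot all_order all_algebra all_fingroup.
From mathcomp Require Import boolp.
Import GRing.Theory.
Local Open Scope group_scope.

Section S.
Variable N : nat.
Local Notation gT := {'GL_2['Z_N]}.
Local Notation uT := {unit 'Z_N}.

Lemma uvalM (u v : uT) : val (u * v) = (val u * val v)%R.
Proof. by []. Qed.
Lemma uval1 : val (1 : uT) = 1%R.
Proof. by []. Qed.

Lemma uC (u v : uT) : commute u v.
Proof. apply: val_inj => /=; exact: mulrC. Qed.

Lemma detUM (x y : gT) : detU (x * y) = detU x * detU y.
Proof. by apply: val_inj => /=; rewrite -mulmxE det_mulmx. Qed.

Lemma detU1 : detU (1 : gT) = 1.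
Proof. by apply: val_inj => /=; rewrite det1. Qed.

Lemma detUV (x : gT) : detU x^-1 = (detU x)^-1.
Proof. by apply: (mulgI (detU x)); rewrite -detUM !mulgV detU1. Qed.

Lemma unit_norm (A : {set uT}) u : u \in 'N(A).
Proof. apply: (subsetP (cent_sub A)); apply/centP => y _; exact: uC. Qed.

Lemma sq_gs : group_set (squaresN N).
Proof.
apply/group_setP; split.
  by apply/imsetP; exists 1 => //; rewrite expg1n.
move=> x y /imsetP[u _ ->] /imsetP[v _ ->]; apply/imsetP; exists (u * v) => //.
by rewrite expgMn //; exact: uC.
Qed.
Canonical sqG := Group sq_gs.

Lemma detQM (x y : gT) : detQ (x * y) = detQ x * detQ y.
Proof. by rewrite /detQ detUM morphM //= unit_norm. Qed.

Lemma mem_sq (u : uT) : u ^+ 2 \in squaresN N.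
Proof. by apply/imsetP; exists u. Qed.

End S.
Section T.
Variable N : nat.
Local Notation gT := {'GL_2['Z_N]}.
Local Notation uT := {unit 'Z_N}.
Variable Gam : 'M[int]_2 -> Prop.
Hypothesis hGam : congruence_subgroup Gam.

Lemma redmxM A B : redmx N (A *m B)%R = (redmx N A *m redmx N B)%R.
Proof. exact: (map_mxM (intmul 1)). Qed.
Lemma redmx1 : redmx N 1%:M%R = 1%:M%R.
Proof. by apply/matrixP=> i j; rewrite !mxE; case: (i == j). Qed.

Lemma img_gs : group_set (imageN N Gam).
Proof.
case: hGam => _ h1 hM _ _.
apply/group_setP; split.
  by rewrite inE; apply/asboolP; exists 1%:M%R => //; rewrite redmx1.
move=> x y; rewrite !inE => /asboolP[A hA eA] /asboolP[B hB eB].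
apply/asboolP; exists (A *m B)%R; first exact: hM.
by rewrite redmxM eA eB /= -mulmxE.
Qed.

Lemma scal_unit (a : uT) : ((val a)%:M : 'M['Z_N]_2)%R \is a GRing.unit.
Proof. rewrite unitmxE det_scalar unitrX //; exact: (valP a). Qed.

Definition scal (a : uT) : gT := FinRing.Unit (scal_unit a).

Lemma detU_scal a : detU (scal a) = a ^+ 2.
Proof. by apply: val_inj; rewrite /= det_scalar expg1 expr2. Qed.

Lemma scal_in a : scal a \in scalarsN N.
Proof. by rewrite inE scalar_mx_is_scalar. Qed.

Lemma scalarsP g : g \in scalarsN N -> exists a, g = scal a.
Proof.
rewrite inE => /is_scalar_mxP[a ea].
have ua : a \is a GRing.unit.
  by rewrite -(unitrX_pos a (n:=2)) // -det_scalar -ea det_GL_unit.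
exists (FinRing.Unit ua); exact: val_inj.
Qed.

Lemma scalC a g : scal a * g = g * scal a.
Proof. apply: val_inj => /=; by rewrite -!mulmxE scalar_mxC. Qed.

Lemma scal_gs : group_set (scalarsN N).
Proof.
apply/group_setP; split; first by rewrite inE /= scalar_mx_is_scalar.
move=> x y /scalarsP[a ->] /scalarsP[b ->].
rewrite inE /= -mulmxE -scalar_mxM scalar_mx_is_scalar //.
Qed.

Hypothesis hH : imageN N Gam = Htilde N Gam :&: SLN N.

Definition SG := Group scal_gs.
Definition HG := Group img_gs.

Lemma SH_comm : commute SG HG.
Proof.
apply: centC; apply/centsP => x /scalarsP[a ->] y _; exact: scalC.
Qed.

Lemma Ht_gs : group_set (Htilde N Gam).
Proof. exact: (introT comm_group_setP SH_comm). Qed.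

Definition HtG := Group Ht_gs.

Lemma S_Ht : scalarsN N \subset HtG.
Proof. exact: (mulG_subl HG (scalarsN N)). Qed.
Lemma H_Ht : imageN N Gam \subset HtG.
Proof. exact: (mulG_subr SG (imageN N Gam)). Qed.

Lemma H_det k : k \in imageN N Gam -> detU k = 1.
Proof. by rewrite hH !inE => /andP[_ /eqP e]; apply: val_inj. Qed.

Lemma Ht_det h : h \in Htilde N Gam -> detU h \in squaresN N.
Proof.
case/mulsgP => s k /scalarsP[a ->] hk ->.
by rewrite detUM (H_det _ hk) mulg1 detU_scal mem_sq.
Qed.

Lemma detQ_eq x y : x \in 'N(HtG) -> y \in 'N(HtG) ->
  coset HtG x = coset HtG y -> detQ x = detQ y.
Proof.
move=> nx ny e.
have hxy : x * y^-1 \in HtG.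
  apply: coset_idr; first by rewrite groupM ?groupV.
  by rewrite morphM ?groupV // morphV //= e mulgV.
have -> : x = (x * y^-1) * y by rewrite mulgKV.
rewrite /detQ (@detUM N (x * y^-1) y) coset_kerl //; exact: Ht_det.
Qed.

Lemma detC_coset x : x \in 'N(HtG) -> detC (coset HtG x) = detQ x.
Proof.
move=> nx; rewrite /detC; apply: detQ_eq => //; first exact: repr_coset_norm.
exact: coset_reprK.
Qed.


Lemma detUJ (y z : gT) : detU (y ^ z) = detU y.
Proof.
rewrite conjgE !detUM detUV.
by rewrite (@uC N (detU y)) mulKg.
Qed.

Lemma SLN_detU y : (y \in SLN N) = (detU y == 1).
Proof. by rewrite inE -val_eqE. Qed.

Lemma SLN_norm (A : {set gT}) : A \subset 'N(SLN N).
Proof.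
apply/subsetP => x _; rewrite inE; apply/subsetP => y.
by rewrite mem_conjg !SLN_detU detUJ.
Qed.

Lemma sq_of (u v : uT) : coset (squaresN N) u = coset (squaresN N) v ->
  exists b : uT, u * v^-1 = b ^+ 2.
Proof.
move=> e.
have : u * v^-1 \in sqG N.
  apply: coset_idr; first exact: unit_norm.
  by rewrite morphM ?unit_norm // morphV ?unit_norm //= e mulgV.
by case/imsetP => b _ ->; exists b.
Qed.

Section Fwd.
Variable G : {group gT}.
Hypotheses (hGa : G :&: SLN N = imageN N Gam) (hGb : scalarsN N \subset G)
  (hGc : [set detU g | g in G] = [set: uT]).

Lemma Ht_G : HtG \subset G.
Proof. by apply: mul_subG => //; rewrite -hGa subsetIl. Qed.

Lemma G_N : G \subset 'N(HtG).
Proof.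
apply: normsM.
  apply: cents_norm; apply/centsP => x _ y /scalarsP[a ->]; exact: esym (scalC a x).
by rewrite -hGa; apply: normsI; [exact: normG | exact: SLN_norm].
Qed.


Lemma fwd : exists W : {group coset_of (Htilde N Gam)},
      [/\ W \subset 'N(Htilde N Gam) / Htilde N Gam,
          {in W &, {morph @detC N Gam : x y / x * y}},
          {in W &, injective (@detC N Gam)},
          @detC N Gam @: W = QN N
        & G :=: coset (Htilde N Gam) @*^-1 W].
Proof.
have hN := G_N; have hK := Ht_G.
exists (G / HtG)%G; split.
- exact: (quotientS HtG hN).
- move=> u v /morphimP[x nx xG ->] /morphimP[y ny yG ->].
  rewrite -morphM //= (detC_coset _ (groupM nx ny)) (detC_coset _ nx) (detC_coset _ ny).
  exact: detQM.
- move=> u v /morphimP[x nx xG ->] /morphimP[y ny yG ->].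
  rewrite (detC_coset _ nx) (detC_coset _ ny) => /sq_of[b eb].
  rewrite -detUV -detUM in eb.
  set g := scal b^-1 * (x * y^-1).
  have gG : g \in G.
    rewrite groupM ?groupM ?groupV //; exact: (subsetP hGb _ (scal_in _)).
  have gH : g \in HtG.
    apply: (subsetP H_Ht); rewrite -hGa inE gG SLN_detU detUM eb detU_scal.
    by rewrite expVgn mulVg.
  have xyH : x * y^-1 \in HtG.
    have -> : x * y^-1 = (scal b^-1)^-1 * g by rewrite /g mulKg.
    by rewrite groupM ?groupV // (subsetP S_Ht) ?scal_in.
  have -> : x = (x * y^-1) * y by rewrite mulgKV.
  exact: (coset_kerl _ xyH).
- apply/eqP; rewrite eqEsubset; apply/andP; split.
    apply/subsetP => q /imsetP[w _ ->].
    by rewrite /detC /detQ /QN mem_quotient ?inE.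
  apply/subsetP => q /morphimP[u _ _ ->].
  have : u \in [set detU g | g in G] by rewrite hGc inE.
  case/imsetP => g gG ->.
  apply/imsetP; exists (coset HtG g); first exact: (mem_quotient HtG gG).
  by rewrite detC_coset // (subsetP hN).
- by rewrite (quotientGK (H:=HtG)) // /normal hK hN.
Qed.

End Fwd.

Lemma bwd (G : {group gT}) (W : {group coset_of (Htilde N Gam)}) :
  {in W &, injective (@detC N Gam)} ->
  @detC N Gam @: W = QN N ->
  G :=: coset (Htilde N Gam) @*^-1 W ->
  [/\ G :&: SLN N = imageN N Gam,
      scalarsN N \subset G
    & [set detU g | g in G] = [set: uT]].
Proof.
move=> hinj himg hG.
have memG x : x \in 'N(HtG) -> coset HtG x \in W -> x \in G.
  by move=> nx wx; rewrite hG inE nx /= inE.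
have hK : HtG \subset G.
  apply/subsetP => h hh; apply: memG; first exact: (subsetP (normG HtG)).
  by rewrite coset_id // group1.
have hGN : G \subset 'N(HtG).
  by apply/subsetP => x; rewrite hG inE => /andP[].
have hGW x : x \in G -> coset HtG x \in W.
  by rewrite hG inE => /andP[_]; rewrite inE.
split.
- apply/eqP; rewrite eqEsubset; apply/andP; split; last first.
    rewrite subsetI (subset_trans H_Ht hK) /= hH; exact: subsetIr.
  apply/subsetP => x; rewrite inE => /andP[xG xS].
  have nx := subsetP hGN x xG.
  have e1 : coset HtG x = coset HtG 1.
    apply: hinj; [exact: hGW | exact: hGW | ].
    rewrite (detC_coset _ nx) (detC_coset _ (group1 _)) /detQ detU1.
    by move: xS; rewrite SLN_detU => /eqP ->.
  rewrite morph1 in e1.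
  rewrite hH inE (coset_idr nx e1) //.
- exact: subset_trans S_Ht hK.
- apply/setP => u; rewrite inE; apply/imsetP.
  have : coset (squaresN N) u \in QN N by rewrite /QN mem_quotient ?inE.
  rewrite -himg => /imsetP[w wW /esym ew].
  pose x := repr w.
  have nx : x \in 'N(HtG) by exact: repr_coset_norm.
  have xG : x \in G by apply: memG => //; rewrite /x coset_reprK.
  move: ew; rewrite /detC -/x /detQ => /sq_of[b eb].
  exists (scal b^-1 * x); first by rewrite groupM // (subsetP hK) // (subsetP S_Ht) // scal_in.
  rewrite detUM detU_scal expVgn -eb invMg invgK mulgKV //.
Qed.

End T.

Theorem lemma5p2 (Gam : 'M[int]_2 -> Prop) (N0 N : nat)
  (hGam : congruence_subgroup Gam)
  (hneg : Gam (- 1%:M)%R)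
  (hlev : level Gam N0)
  (hN : N = N_of_level N0)
  (hN1 : (1 < N)%N)
  (hH : imageN N Gam = Htilde N Gam :&: SLN N) :
  forall G : {group {'GL_2['Z_N]}},
    [/\ G :&: SLN N = imageN N Gam,
        scalarsN N \subset G
      & [set detU g | g in G] = [set: {unit 'Z_N}]]
    <->
    exists W : {group coset_of (Htilde N Gam)},
      [/\ W \subset 'N(Htilde N Gam) / Htilde N Gam,
          {in W &, {morph @detC N Gam : x y / x * y}},
          {in W &, injective (@detC N Gam)},
          @detC N Gam @: W = QN N
        & G :=: coset (Htilde N Gam) @*^-1 W].
Proof.
move=> G; split.
  case=> ha hb hc. exact: (@fwd N Gam hGam hH G ha hb hc).
case=> W [_ _ hi himg hG].
exact: (@bwd N Gam hGam hH G W hi himg hG).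
Qed.
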